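(* Let $n\ge2$ and let $\lambda_1,\dots,\lambda_n$ be real numbers with $\lambda_i\ne\lambda_j$ for $i\neq j$. Let $\sigma:\{1,\dots,n\}\to\{1,\dots,n\}$ be a permutation different from the identity, and let $M$ be the $n\times n$ matrix with entries $$M_{ij}=\lambda_j^{\,i}-\lambda_{\sigma(j)}^{\,i},\qquad 1\le i,j\le n.$$ If $v=(v_1,\dots,v_n)\in\mathbb{R}^n$ satisfies $Mv^T=0$, then there are two indices $i\neq j$ such that $v_i=v_j$. *)

(* Defs.v *)
From mathcomp Require Import all_boot all_order all_algebra all_fingroup.
From mathcomp Require Import reals.
Set Implicit Arguments. Unset Strict Implicit. Unset Printing Implicit Defensive.
Import GRing.Theory Num.Theory.
Local Open Scope ring_scope.

(* M_{ij} = lambda_j^i - lambda_{sigma j}^i, 1 <= i,j <= n;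
   indices are 0-based ordinals, so the exponent is (i+1). *)
Definition Mmat (R : ringType) (n : nat) (lam : 'I_n -> R) (s : 'S_n) : 'M[R]_n :=
  \matrix_(i < n, j < n) (lam j ^+ i.+1 - lam (s j) ^+ i.+1).

(* Main.v *)
Require Import Defs.
From mathcomp Require Import all_boot all_order all_algebra all_fingroup.
From mathcomp Require Import reals.
From mathcomp Require Import ring.
Import GRing.Theory Num.Theory.
Local Open Scope ring_scope.

Lemma key (R : fieldType) n (lam w : 'I_n -> R)
  (H : forall i : 'I_n, \sum_k w k * lam k ^+ i.+1 = 0) (p : {poly R}) :
  (size p <= n)%N -> \sum_k w k * lam k * p.[lam k] = 0.
Proof.
move=> hp.
under eq_bigr => k _ do rewrite (horner_coef_wide _ hp) mulr_sumr.
rewrite exchange_big /= big1 // => i _.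
have -> : \sum_k w k * lam k * (p`_i * lam k ^+ i) = p`_i * \sum_k w k * lam k ^+ i.+1.
  rewrite mulr_sumr; apply: eq_bigr => k _.
  by rewrite exprS; ring.
by rewrite H mulr0.
Qed.

Lemma key2 (R : fieldType) n (lam w : 'I_n -> R) (hlam : injective lam)
  (H : forall i : 'I_n, \sum_k w k * lam k ^+ i.+1 = 0) k :
  w k * lam k = 0.
Proof.
pose p := \prod_(j <- enum (predC1 k)) ('X - (lam j)%:P).
have hp : (size p <= n)%N.
  by rewrite /p size_prod_XsubC -cardE cardC1 card_ord prednK // (leq_ltn_trans _ (ltn_ord k)).
have := @key _ _ lam w H p hp.
rewrite (bigD1 k) //= big1 ?addr0; last first.
  move=> j hj; rewrite /p horner_prod big_enum /= (bigD1 j) //=.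
  by rewrite hornerXsubC subrr mul0r mulr0.
rewrite /p horner_prod.
move/eqP; rewrite mulf_eq0 => /orP [/eqP //|].
rewrite prodf_seq_eq0 => /hasP [j]; rewrite mem_enum => hj /andP [_].
rewrite hornerXsubC subr_eq0 => /eqP /hlam e.
by move: hj; rewrite !inE e eqxx.
Qed.

Theorem lemma5p2 (R : realType) (n : nat) (hn : (2 <= n)%N)
  (lam : 'I_n -> R) (hlam : injective lam) (s : 'S_n) (hs : s != 1%g)
  (v : 'cV[R]_n) (hv : Mmat lam s *m v = 0) :
  exists i j : 'I_n, i != j /\ v i 0 = v j 0.
Proof.
pose w k := v k 0 - v ((s^-1)%g k) 0.
have E (i : 'I_n) : \sum_k w k * lam k ^+ i.+1 = 0.
  have := congr1 (fun M : 'M[R]_(n,1) => M i 0) hv; rewrite /= !mxE => e; apply: etrans e.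
  rewrite /w; under eq_bigr => k _ do rewrite mulrBl.
  rewrite sumrB; under [X in _ - X = _]eq_bigr => k _ do rewrite mulrC.
  under [X in _ = X]eq_bigr => k _ do rewrite mxE mulrBl.
  rewrite sumrB; congr (_ - _); first by apply: eq_bigr => k _; rewrite mulrC.
  rewrite (reindex_inj (@perm_inj _ s)) /=; apply: eq_bigr => k _.
  by rewrite permK.
have W k : w k * lam k = 0 := @key2 _ _ lam w hlam E k.
have Wk k : lam k != 0 -> v k 0 = v ((s^-1)%g k) 0.
  move=> hk; have := W k; move/eqP; rewrite mulf_eq0 (negbTE hk) orbF subr_eq0.
  by move/eqP.
have [k hk] : exists k, s k != k.
  case: (pickP (fun k => s k != k)) => [k hk | h]; first by exists k.
  by move/eqP: hs; case; apply/permP => x; rewrite perm1; have := h x => /negbFE/eqP.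
have [z|nz] := eqVneq (lam (s k)) 0.
  have lk : lam k != 0.
    by apply/eqP => e; move: hk; rewrite -z in e; rewrite -(hlam _ _ e) eqxx.
  exists k, ((s^-1)%g k); split; last exact: Wk.
  by apply/eqP => e; move: hk; rewrite {1}e permKV eqxx.
exists (s k), k; split => //.
by rewrite (Wk _ nz) permK.
Qed.
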